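(* Let $1\le n\le N$, $E\in\mathbb R$, $\mathcal J\in\mathbb N$, let $\tilde C(n)>0$ be a constant depending only on $n$, let $l,L\ge1$ and let $\Lambda^{(n)}_L(\mathbf u)$ be an $n$-particle cube. Assume there exist $\mathcal J$ cubes $\Lambda^{(n)}_{\tilde C(n)l}(\mathbf k^{(1)}),\dots,\Lambda^{(n)}_{\tilde C(n)l}(\mathbf k^{(\mathcal J)})$ such that for every $\mathbf v\in\mathbb Z^{nd}$ not belonging to any of these cubes, $\Lambda^{(n)}_l(\mathbf v)$ is $(E,\tfrac12)$-NS. Then, if $l>2\tilde C(n)$, the cube $\Lambda^{(n)}_L(\mathbf u)$ can be decomposed into two disjoint subsets $\Lambda^{(n)}_L(\mathbf u)=B\cup G$ such that $B=\bigcup_j\Omega_j$ is a finite union with $\operatorname{diam}(\Omega_j)\le(2\mathcal J+1)l^2$ for each $j$ and $\operatorname{dist}(\Omega_j,\Omega_{j'})\ge l^2$ for $j\ne j'$, and for every $\mathbf v\in G$ the cube $\Lambda^{(n)}_l(\mathbf v)$ is $(E,\tfrac12)$-NS.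
   Context: Points of $\mathbb Z^{nd}$ are $\mathbf x=(x_1,\dots,x_n)$, $x_j\in\mathbb Z^d$, $\|x_j\|=\max_i|x_j^{(i)}|$, $\|\mathbf x\|=\max_j\|x_j\|$, $\langle\mathbf x\rangle=\max\{1,\|\mathbf x\|\}$; distances and diameters are taken in this max norm. Cubes $\Lambda^{(n)}_L(\mathbf u)=\{\mathbf x\in\mathbb Z^{nd}:\|\mathbf x-\mathbf u\|\le L\}$. The $n$-particle operator is $\mathbf H^{(n)}=\frac1g(\mathbf T+\mathbf U)+\mathbf V$ on $\ell^2(\mathbb Z^{nd})$ ($g\ne0$, $r>0$): $\mathbf T(\mathbf x,\mathbf y)=\langle y_j-x_j\rangle^{-r}$ if there is $j$ with $x_i=y_i$ for all $i\ne j$, else $0$; $\mathbf U(\mathbf x)=\sum_{j_1<j_2}U(x_{j_1},x_{j_2})$ with $U$ bounded symmetric, vanishing when $\|x-x'\|\ge\mathrm r_0$; $\mathbf V(\mathbf x)=\sum_jV(x_j)$ with real $V(x)$. $\mathbf H^{(n)}_\Lambda$ is the restriction to $\Lambda$ and $\mathbf G^{(n)}_\Lambda(E)=(\mathbf H^{(n)}_\Lambda-E)^{-1}$. Sobolev norm of a matrix $\mathcal M$ on $X\times Y$: $\|\mathcal M\|_s^2=C_0\sum_{\mathbf v\in X-Y}(\sup_{\mathbf x-\mathbf y=\mathbf v}|\mathcal M(\mathbf x,\mathbf y)|)^2\langle\mathbf v\rangle^{2s}$, $C_0=C_0(s_0^{(n)})>0$ fixed. With parameters $\tau_n\ge0$,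 $nd/2<s_0^{(n)}\le r_n<r-nd/2$, a cube $\Lambda^{(n)}_l(\mathbf v)$ is $(E,\tfrac12)$-NS if $\mathbf G^{(n)}_{\Lambda^{(n)}_l(\mathbf v)}(E)$ exists and $\|\mathbf G^{(n)}_{\Lambda^{(n)}_l(\mathbf v)}(E)\|_s\le l^{\tau_n+s/2}$ for all $s\in[s_0^{(n)},r_n]$. *)

(* Defs.v *)
From HB Require Import structures.
From mathcomp Require Import all_boot all_order all_algebra.
From mathcomp Require Import all_classical all_reals all_analysis.
Set Implicit Arguments. Unset Strict Implicit. Unset Printing Implicit Defensive.
Import Order.TTheory GRing.Theory Num.Theory.
Local Open Scope classical_set_scope.
Local Open Scope ring_scope.

(* A point x = (x_1,...,x_n) of Z^{nd}: an n x d integer matrix, x_j = row j x. *)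
Notation pt n d := 'M[int]_(n, d).

Definition mnorm (n d : nat) (x : pt n d) : nat :=
  (\max_(j < n) \max_(i < d) `|x j i|%N)%N.
Definition rnorm (d : nat) (x : 'rV[int]_d) : nat :=
  (\max_(i < d) `|x ord0 i|%N)%N.
Definition bra (n d : nat) (x : pt n d) : nat := maxn 1 (mnorm x).
Definition brar (d : nat) (x : 'rV[int]_d) : nat := maxn 1 (rnorm x).

Definition cube (R : realType) (n d : nat) (L : R) (u : pt n d) : set (pt n d) :=
  [set x | ((mnorm (x - u))%:R <= L)%R].

Definition Tker (R : realType) (n d : nat) (r : R) (x y : pt n d) : R :=
  if [exists j : 'I_n, forall i : 'I_n, (i != j) ==> (row i x == row i y)]
  then ((\max_(j < n) brar (row j y - row j x))%N)%:R `^ (- r)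
  else 0.
(* Note: when at most one row differs, the max over j of <y_j - x_j> is
   <y_j - x_j> for the differing j (or 1 if x = y), as in the paper. *)

Definition Upot (R : realType) (n d : nat) (U : 'rV[int]_d -> 'rV[int]_d -> R)
  (x : pt n d) : R :=
  \sum_(j1 < n) \sum_(j2 < n | (j1 < j2)%N) U (row j1 x) (row j2 x).

Definition Vpot (R : realType) (n d : nat) (V : 'rV[int]_d -> R) (x : pt n d) : R :=
  \sum_(j < n) V (row j x).

Definition Hker (R : realType) (n d : nat) (g r : R)
  (U : 'rV[int]_d -> 'rV[int]_d -> R) (V : 'rV[int]_d -> R) (x y : pt n d) : R :=
  g^-1 * Tker r x y + (if x == y then g^-1 * Upot U x + Vpot V x else 0).

Definition is_resolvent (R : realType) (n d : nat) (g r : R)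
  (U : 'rV[int]_d -> 'rV[int]_d -> R) (V : 'rV[int]_d -> R) (E : R)
  (Lam : set (pt n d)) (G : pt n d -> pt n d -> R) : Prop :=
  forall x y, Lam x -> Lam y ->
    (\sum_(z \in Lam) (Hker g r U V x z - (if x == z then E else 0)) * G z y
       = (if x == y then 1 else 0)) /\
    (\sum_(z \in Lam) G x z * (Hker g r U V z y - (if z == y then E else 0))
       = (if x == y then 1 else 0)).

Definition diffset (n d : nat) (X Y : set (pt n d)) : set (pt n d) :=
  [set v | exists x y, [/\ X x, Y y & v = x - y]].
Definition supdiff (R : realType) (n d : nat) (X Y : set (pt n d))
  (M : pt n d -> pt n d -> R) (v : pt n d) : R :=
  sup [set a | exists x y, [/\ X x, Y y, x - y = v & a = `|M x y|]].
Definition sobnorm (R : realType) (n d : nat) (C0 s : R) (X Y : set (pt n d))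
  (M : pt n d -> pt n d -> R) : R :=
  Num.sqrt (C0 * \sum_(v \in diffset X Y)
                   (supdiff X Y M v) ^+ 2 * ((bra v)%:R `^ (2 * s))).

Definition NS (R : realType) (n d : nat) (g r : R)
  (U : 'rV[int]_d -> 'rV[int]_d -> R) (V : 'rV[int]_d -> R)
  (C0 tau s0 rn : R) (E l : R) (v : pt n d) : Prop :=
  exists G : pt n d -> pt n d -> R,
    is_resolvent g r U V E (cube l v) G /\
    forall s, s0 <= s <= rn ->
      sobnorm C0 s (cube l v) (cube l v) G <= l `^ (tau + s / 2).

Definition diam_le (R : realType) (n d : nat) (Om : set (pt n d)) (D : R) : Prop :=
  forall x y, Om x -> Om y -> ((mnorm (x - y))%:R <= D)%R.
Definition dist_ge (R : realType) (n d : nat) (A B : set (pt n d)) (D : R) : Prop :=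
  forall x y, A x -> B y -> (D <= (mnorm (x - y))%:R)%R.

(* Main.v *)
Require Import Defs.
From HB Require Import structures.
From mathcomp Require Import all_boot all_order all_algebra.
From mathcomp Require Import all_classical all_reals all_analysis.
From mathcomp Require Import ring lra.
Import Order.TTheory GRing.Theory Num.Theory.
Local Open Scope classical_set_scope.
Local Open Scope ring_scope.

Lemma mnorm_tri (n d : nat) (x y z : pt n d) :
  (mnorm (x - z) <= mnorm (x - y) + mnorm (y - z))%N.
Proof.
rewrite /mnorm; apply/bigmax_leqP => j _; apply/bigmax_leqP => i _.
rewrite !mxE; apply: leq_trans (leqD_dist _ (y j i) _) _.
apply: leq_add.
  apply: leq_trans (leq_bigmax j); apply: leq_trans (leq_bigmax i).
  by rewrite !mxE.
apply: leq_trans (leq_bigmax j); apply: leq_trans (leq_bigmax i).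
by rewrite !mxE.
Qed.

Lemma mnormC (n d : nat) (x y : pt n d) : mnorm (x - y) = mnorm (y - x).
Proof.
rewrite /mnorm; apply: eq_bigr => j _; apply: eq_bigr => i _.
by rewrite !mxE distnC.
Qed.

Lemma dtri (R : realType) (n d : nat) (x y z : pt n d) :
  (mnorm (x - z))%:R <= (mnorm (x - y))%:R + (mnorm (y - z))%:R :> R.
Proof. by rewrite -natrD ler_nat mnorm_tri. Qed.

Lemma path_bound (R : realType) (n d J : nat) (A : 'I_J -> set (pt n d))
  (e : rel 'I_J) (a b : R) :
  (forall j x y, A j x -> A j y -> (mnorm (x - y))%:R <= a) ->
  (forall j j', e j j' -> exists x y, [/\ A j x, A j' y & (mnorm (x - y))%:R <= b]) ->
  forall p j, path e j p -> forall x y, A j x -> A (last j p) y ->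
    (mnorm (x - y))%:R <= (size p).+1%:R * a + (size p)%:R * b.
Proof.
move=> hA he; elim=> [|j2 p IH] j /=.
  by move=> _ x y Ax Ay; rewrite mul1r mul0r addr0; exact: hA Ax Ay.
case/andP=> ej pj x y Ax Ay.
have [p1 [q1 [Ap1 Aq1 hpq]]] := he _ _ ej.
have h1 := hA _ _ _ Ax Ap1.
have h2 := IH _ pj _ _ Aq1 Ay.
apply: le_trans (dtri R _ _ x p1 y) _.
apply: le_trans (lerD h1 (dtri R _ _ p1 q1 y)) _.
have -> : ((size p).+2%:R * a + (size p).+1%:R * b : R) =
  a + (b + ((size p).+1%:R * a + (size p)%:R * b)).
  rewrite -[(size p).+2]addn1 -[(size p).+1]addn1 !natrD; ring.
by rewrite lerD2l lerD.
Qed.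
Theorem lemma7p4 (R : realType) (d n N : nat)
  (* standing assumptions on the operator H^{(n)} *)
  (g r r0 : R) (U : 'rV[int]_d -> 'rV[int]_d -> R) (V : 'rV[int]_d -> R)
  (hg : g != 0) (hr : 0 < r)
  (hUb : exists M : R, forall x y, `|U x y| <= M)
  (hUs : forall x y, U x y = U y x)
  (hUr : forall x y, r0 <= (rnorm (x - y))%:R -> U x y = 0)
  (* parameters of the NS property *)
  (C0 tau s0 rn : R) (hC0 : 0 < C0) (htau : 0 <= tau)
  (hs0 : (n * d)%:R / 2 < s0) (hs0rn : s0 <= rn) (hrn : rn < r - (n * d)%:R / 2)
  (* data of the lemma *)
  (hd : (0 < d)%N) (hn1 : (1 <= n)%N) (hnN : (n <= N)%N)
  (E : R) (J : nat) (Ct : R) (hCt : 0 < Ct) (l L : R) (hl : 1 <= l) (hL : 1 <= L)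
  (u : pt n d) (k : 'I_J -> pt n d)
  (hNS : forall v : pt n d, (forall j : 'I_J, ~ cube (Ct * l) (k j) v) ->
           NS g r U V C0 tau s0 rn E l v) :
  2 * Ct < l ->
  exists (B G : set (pt n d)),
    [/\ B `&` G = set0, B `|` G = cube L u,
        exists (m : nat) (Om : 'I_m -> set (pt n d)),
          [/\ B = \bigcup_(j in setT) Om j,
              forall j, diam_le (Om j) ((2 * J + 1)%:R * l ^+ 2) &
              forall j j', j != j' -> dist_ge (Om j) (Om j') (l ^+ 2)]
      & forall v, G v -> NS g r U V C0 tau s0 rn E l v].
Proof.
move=> hlC.
pose P := fun v : pt n d => NS g r U V C0 tau s0 rn E l v.
pose B := [set v | cube L u v /\ ~ P v].
pose G := [set v | cube L u v /\ P v].
pose A := fun j : 'I_J => [set v | cube (Ct * l) (k j) v /\ B v].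
pose e : rel 'I_J := fun j j' =>
  `[< exists x y, [/\ A j x, A j' y & (mnorm (x - y))%:R < l ^+ 2] >].
have esym : symmetric e.
  move=> j j'; apply/asboolP/asboolP => -[x [y [h1 h2 h3]]];
  by exists y, x; rewrite mnormC.
have hcs := sym_connect_sym esym.
pose rt := fingraph.root e.
pose Om := fun i : 'I_J => if rt i == i then [set v | exists j, connect e i j /\ A j v]
  else set0.
have hl0 : 0 < l by apply: lt_le_trans hl; rewrite ltr01.
have hA : forall j x y, A j x -> A j y -> (mnorm (x - y))%:R <= l ^+ 2 :> R.
  move=> j x y [hx _] [hy _].
  apply: le_trans (dtri R _ _ x (k j) y) _.
  rewrite /cube /= in hx hy; rewrite mnormC in hy.
  apply: le_trans (lerD hx hy) _.
  rewrite expr2; nra.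
have he : forall j j', e j j' -> exists x y,
    [/\ A j x, A j' y & (mnorm (x - y))%:R <= l ^+ 2 :> R].
  move=> j j' /asboolP [x [y [h1 h2 h3]]]; exists x, y; split => //; exact: ltW.
exists B, G; split.
- apply/seteqP; split=> [v [[_ h1] [_ h2]] //|v //].
- apply/seteqP; split=> v; first by case=> -[].
  move=> h; case: (pselect (P v)) => hp; [right|left]; by split.
- exists J, Om; split.
  + apply/seteqP; split=> v.
    * move=> hB.
      have [j hj] : exists j, cube (Ct * l) (k j) v.
        apply: contrapT => hn; apply: hB.2; apply: hNS => j hj; apply: hn; by exists j.
      exists (rt j) => //.
      rewrite /Om /rt root_root // eqxx /=.
      exists j; split; last by split.
      by rewrite hcs connect_root.
    * case=> i _; rewrite /Om; case: ifP => // _ [j [_ [_ hB]]]; exact: hB.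
  + move=> i x y; rewrite /Om; case: ifP => _ //.
    move=> [j [cij Ajx]] [j' [cij' Ajy]].
    have cjj : connect e j j' by apply: connect_trans cij'; rewrite hcs.
    case/connectP: cjj => p pp lp.
    move: Ajy; rewrite lp; case: (shortenP pp) => p' pp' up' _ Ajy.
    have := @path_bound R _ _ _ _ _ _ _ hA he _ _ pp' _ _ Ajx Ajy.
    have hs : (size p' <= J)%N.
      case/andP: up' => _ up''.
      have := uniq_leq_size (s2 := enum 'I_J) up'' (fun z _ => mem_enum _ z).
      by rewrite size_enum_ord.
    move=> h; apply: le_trans h _.
    have hl2 : 0 <= l ^+ 2 :> R by rewrite exprn_ge0 // ltW.
    have : (size p')%:R <= J%:R :> R by rewrite ler_nat.
    rewrite -[(size p').+1]addn1 natrD natrD natrM /=.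
    nra.
  + move=> i i' neq x y; rewrite /Om; case: ifP => ri //; case: ifP => ri' //.
    move=> [j [cij Ajx]] [j' [cij' Ajy]].
    rewrite leNgt; apply/negP => hlt.
    have ejj : e j j' by apply/asboolP; exists x, y.
    have : connect e i i'.
      apply: connect_trans cij _; apply: connect_trans (connect1 ejj) _.
      by rewrite hcs.
    move/(fingraph.rootP hcs); rewrite -/rt (eqP ri) (eqP ri') => hii.
    by move/eqP: neq.
- by move=> v [_ h].
Qed.
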